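(* Let $E$ be a finite set and $V \subset \mathbb R^E$ a linear subspace with oriented matroid $M$. Define an equivalence relation on the set of all triples $(F,G,T)$, where $T$ is a tope of $M$ and $F \subset G$ are flats relatively acyclic in $T$, by $(F,G,T) \sim (F',G',T')$ if and only if $(F,G) = (F',G')$ and $\pi_{G \setminus F}(T) = \pi_{G \setminus F}(T')$. Then for two such triples, ${}_T\mathcal Y_{FG}^\circ \cap {}_{T'}\mathcal Y_{F'G'}^\circ$ is empty unless $(F,G,T) \sim (F',G',T')$, in which case ${}_T\mathcal Y_{FG}^\circ = {}_{T'}\mathcal Y_{F'G'}^\circ$.
   Context: $\mathbb P^1_{\mathbb R}=\mathbb R\cup\{\infty\}$ with analytic topology. The sign map $s:\mathbb R^E\to\{-,0,+\}^E$ records signs of coordinates; the covectors of $M$ are $\{s(v):v\in V\}$; for a signed set $X$, $X^-,X^0,X^+$ are the coordinates with value $-,0,+$; $X\le Y$ means $X^+\subset Y^+$, $X^-\subset Y^-$; topes are maximal covectors; flats are the sets $X^0$. A flat is relatively acyclic in a tope $T$ if it equals $X^0$ for a covector $X\le T$. $\pi_A$ denotes restriction of a signed set (or vector) to the coordinates in $A$. ${}_T\mathcal Y_V$ is the closure of $s^{-1}(T)\cap V$ in $(\mathbb P^1_{\mathbb R})^E$, and ${}_T\mathcal Y_{FG}^\circ := {}_T\mathcal Y_V \cap (0^F\times\mathbb R_{>0}^{(G\setminus F)\cap T^+}\times\mathbb R_{<0}^{(G\setminus F)\cap T^-}\times\infty^{E\setminus G})$, i.e. points of ${}_T\mathcal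 Y_V$ with coordinates $0$ on $F$, positive on $(G\setminus F)\cap T^+$, negative on $(G\setminus F)\cap T^-$, and $\infty$ on $E\setminus G$. *)

(* Defs.v *)
From HB Require Import structures.
From mathcomp Require Import all_boot all_order all_algebra.
From mathcomp Require Import reals.
Set Implicit Arguments. Unset Strict Implicit. Unset Printing Implicit Defensive.
Import Order.TTheory GRing.Theory Num.Theory.
Local Open Scope ring_scope.

Inductive sign := SNeg | SZero | SPos.

Section OM.
Variables (R : realType) (E : finType).

Definition is_subspace (V : (E -> R) -> Prop) : Prop :=
  [/\ V (fun _ => 0),
      (forall v w, V v -> V w -> V (fun e => v e + w e)) &
      (forall (a : R) v, V v -> V (fun e => a * v e))].

Definition sgnR (x : R) : sign :=
  if x < 0 then SNeg else if x == 0 then SZero else SPos.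
Definition sgn_vec (v : E -> R) : E -> sign := fun e => sgnR (v e).

Definition covector (V : (E -> R) -> Prop) (X : E -> sign) : Prop :=
  exists v, V v /\ forall e, X e = sgn_vec v e.

Definition sle (X Y : E -> sign) : Prop :=
  forall e, (X e = SPos -> Y e = SPos) /\ (X e = SNeg -> Y e = SNeg).

Definition tope (V : (E -> R) -> Prop) (T : E -> sign) : Prop :=
  covector V T /\
  forall Y, covector V Y -> sle T Y -> forall e, Y e = T e.

Definition zero_set (X : E -> sign) (F : {set E}) : Prop :=
  forall e, e \in F <-> X e = SZero.

Definition flat (V : (E -> R) -> Prop) (F : {set E}) : Prop :=
  exists X, covector V X /\ zero_set X F.

Definition rel_acyclic (V : (E -> R) -> Prop) (T : E -> sign) (F : {set E}) : Prop :=
  exists X, covector V X /\ sle X T /\ zero_set X F.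

Definition triple (V : (E -> R) -> Prop) (F G : {set E}) (T : E -> sign) : Prop :=
  tope V T /\ flat V F /\ flat V G /\ rel_acyclic V T F /\
  rel_acyclic V T G /\ F \subset G.

Definition triple_equiv (F G : {set E}) (T : E -> sign)
    (F' G' : {set E}) (T' : E -> sign) : Prop :=
  [/\ F = F', G = G' & forall e, e \in G :\: F -> T e = T' e].

(* P^1_R = R ∪ {∞}, modelled as option R with None = ∞. *)
Definition P1 := option R.

(* basic neighbourhoods of the analytic topology on P^1_R, tested on a
   real number x: for a in R, {x : |x - a| < eps}; for ∞, {x : |x| > 1/eps}
   (together with ∞ itself, irrelevant for approximating by real points). *)
Definition near_P1 (p : P1) (x : R) (eps : R) : Prop :=
  match p with
  | Some a => `|x - a| < eps
  | None => eps^-1 < `|x|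
  end.

(* closure in (P^1_R)^E (product topology) of a set S of real points *)
Definition in_closure (S : (E -> R) -> Prop) (p : E -> P1) : Prop :=
  forall eps : R, 0 < eps -> exists v, S v /\ forall e, near_P1 (p e) (v e) eps.

Definition Y_V (V : (E -> R) -> Prop) (T : E -> sign) (p : E -> P1) : Prop :=
  in_closure (fun v => V v /\ forall e, sgn_vec v e = T e) p.

Definition Y_FG_open (V : (E -> R) -> Prop) (T : E -> sign) (F G : {set E})
    (p : E -> P1) : Prop :=
  Y_V V T p /\
  forall e,
    (e \in F -> p e = Some 0) /\
    (e \in G :\: F -> T e = SPos -> exists x, p e = Some x /\ 0 < x) /\
    (e \in G :\: F -> T e = SNeg -> exists x, p e = Some x /\ x < 0) /\
    (e \notin G -> p e = None).

End OM.

(* Main.v *)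
Require Import Defs.
From HB Require Import structures.
From mathcomp Require Import all_boot all_order all_algebra.
From mathcomp Require Import reals.
From mathcomp Require Import ring lra.
From Stdlib Require Import FunctionalExtensionality Classical.
Set Implicit Arguments. Unset Strict Implicit. Unset Printing Implicit Defensive.
Import Order.TTheory GRing.Theory Num.Theory.
Local Open Scope ring_scope.

Section Aux.
Variables (R : realType) (E : finType).

Lemma sgnR_pos (x : R) : 0 < x -> sgnR x = SPos.
Proof. move=> h; rewrite /sgnR ltNge (ltW h) /= gt_eqF //. Qed.
Lemma sgnR_neg (x : R) : x < 0 -> sgnR x = SNeg.
Proof. by move=> h; rewrite /sgnR h. Qed.
Lemma sgnR_0 : sgnR (0 : R) = SZero.
Proof. by rewrite /sgnR ltxx eqxx. Qed.
Lemma sgnR_cases (x : R) :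
  (sgnR x = SPos /\ 0 < x) \/ (sgnR x = SNeg /\ x < 0) \/ (sgnR x = SZero /\ x = 0).
Proof.
case: (ltrgtP x 0) => h.
- by right; left; rewrite sgnR_neg.
- by left; rewrite sgnR_pos.
- by right; right; rewrite h sgnR_0.
Qed.
Lemma sgnR_Z (x : R) : sgnR x = SZero -> x = 0.
Proof. by case: (sgnR_cases x) => [[->]|[[->]|[]]]. Qed.
Lemma sgnR_P (x : R) : sgnR x = SPos -> 0 < x.
Proof. by case: (sgnR_cases x) => [[]|[[->]|[->]]]. Qed.
Lemma sgnR_N (x : R) : sgnR x = SNeg -> x < 0.
Proof. by case: (sgnR_cases x) => [[->]|[[]|[->]]]. Qed.

Lemma sgn_close (a b : R) : `|a - b| < `|b| -> sgnR a = sgnR b.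
Proof.
move=> h; case: (ltrgtP b 0) => hb.
- rewrite (ltr0_norm hb) in h; move: h; rewrite ltr_norml => /andP[h1 h2].
  rewrite !sgnR_neg //; lra.
- rewrite (gtr0_norm hb) in h; move: h; rewrite ltr_norml => /andP[h1 h2].
  rewrite !sgnR_pos //; lra.
- by rewrite hb normr0 normr_lt0 in h.
Qed.

Lemma sgnR_scale (c x : R) : 0 < c -> sgnR (c * x) = sgnR x.
Proof.
move=> hc; case: (sgnR_cases x) => [[-> h]|[[-> h]|[-> ->]]].
- by rewrite sgnR_pos // mulr_gt0.
- by rewrite sgnR_neg // pmulr_rlt0.
- by rewrite mulr0 sgnR_0.
Qed.

Lemma lb_fin (f : E -> R) : (forall e, 0 < f e) ->
  exists m, 0 < m /\ forall e, m <= f e.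
Proof.
move=> hf.
suff [m [hm H]] : exists m, 0 < m /\ forall e, e \in enum E -> m <= f e.
  by exists m; split=> // e; apply: H; rewrite mem_enum.
elim: (enum E) => [|a s [m [hm IH]]]; first by exists 1; split.
exists (if m <= f a then m else f a); split; first by case: ifP.
move=> e; rewrite in_cons => /orP[/eqP->|hs].
- by case: ifP => // _.
- have := IH e hs; case: ifP => // /negbT; rewrite -ltNge => h1 h2; lra.
Qed.

Lemma ub_fin (f : E -> R) : exists M, 0 <= M /\ forall e, `|f e| <= M.
Proof.
suff [m [hm H]] : exists m, 0 <= m /\ forall e, e \in enum E -> `|f e| <= m.
  by exists m; split=> // e; apply: H; rewrite mem_enum.
elim: (enum E) => [|a s [m [hm IH]]]; first by exists 0; split.
exists (m + `|f a|); split; first by have := normr_ge0 (f a); lra.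
move=> e; rewrite in_cons => /orP[/eqP->|hs].
- lra.
- have := IH e hs; have := normr_ge0 (f a); lra.
Qed.

Lemma lb_nz (f : E -> R) : exists m, 0 < m /\ forall e, m <= (if f e == 0 then 1 else `|f e|).
Proof.
apply: lb_fin => e; case: eqP => [_|/eqP h]; [exact: ltr01 | by rewrite normr_gt0].
Qed.

Variable V : (E -> R) -> Prop.
Hypothesis hV : is_subspace V.

Lemma Vext f g : V f -> (forall e, f e = g e) -> V g.
Proof. by move=> h H; have -> : g = f by apply: functional_extensionality => e; rewrite H. Qed.

Lemma Vlin v w (a b : R) : V v -> V w -> V (fun e => a * v e + b * w e).
Proof. case: hV => _ hA hM hv hw; exact: hA (hM _ _ hv) (hM _ _ hw). Qed.

Lemma V0 : V (fun _ => 0).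
Proof. by case: hV. Qed.

Lemma proj_lemma (s : seq E) : exists C : R, 0 <= C /\ forall v, V v ->
  forall eta : R, 0 <= eta -> (forall f, f \in s -> `|v f| <= eta) ->
  exists z, V z /\ (forall f, f \in s -> z f = v f) /\ forall e, `|z e| <= C * eta.
Proof.
elim: s => [|a s [C [hC IH]]].
  exists 0; split=> // v _ eta _ _; exists (fun _ => 0); split; first exact: V0.
  by split=> // e; rewrite normr0 mul0r.
case: (classic (exists w, V w /\ (forall f, f \in s -> w f = 0) /\ w a = 1)).
- move=> [w [Vw [ws wa]]].
  have [W [hW HW]] := ub_fin w.
  exists (C + (1 + C) * W); split; first by nra.
  move=> v Vv eta heta hs.
  have [z1 [Vz1 [z1s z1b]]] := IH v Vv eta heta (fun f hf => hs f (ltac:(by rewrite in_cons hf orbT))).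
  exists (fun e => 1 * z1 e + (v a - z1 a) * w e); split; first exact: Vlin.
  split.
  + move=> f; rewrite in_cons => /orP[/eqP->|hf]; first by rewrite wa; ring.
    by rewrite ws // z1s //; ring.
  + move=> e.
    have h1 := z1b e; have h2 := z1b a; have h3 := HW e.
    have h4 : `|v a| <= eta by apply: hs; rewrite mem_head.
    have h5 : `|1 * z1 e + (v a - z1 a) * w e| <= `|z1 e| + (`|v a| + `|z1 a|) * `|w e|.
      rewrite mul1r; apply: (le_trans (ler_normD _ _)); rewrite lerD2l normrM.
      by rewrite ler_wpM2r // ler_normB.
    have h6 : (`|v a| + `|z1 a|) * `|w e| <= (eta + C * eta) * W.
      apply: ler_pM => //; [by rewrite addr_ge0|by rewrite lerD].
    nra.
- move=> hno; exists C; split=> // v Vv eta heta hs.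
  have [z1 [Vz1 [z1s z1b]]] := IH v Vv eta heta (fun f hf => hs f (ltac:(by rewrite in_cons hf orbT))).
  exists z1; split=> //; split=> // f; rewrite in_cons => /orP[/eqP->|hf]; last exact: z1s.
  set d := fun e => 1 * v e + (-1) * z1 e.
  have Vd : V d by apply: Vlin.
  have ds : forall f, f \in s -> d f = 0 by move=> g hg; rewrite /d z1s //; ring.
  case: (eqVneq (d a) 0) => hda.
    by move: hda; rewrite /d => /eqP; rewrite mul1r mulN1r subr_eq0 => /eqP.
  exfalso; apply: hno; exists (fun e => (d a)^-1 * d e + 0 * d e); split; first exact: Vlin.
  split; first by move=> g hg; rewrite (ds g hg) mulr0 mul0r addr0.
  by rewrite mul0r addr0 mulVf.
Qed.


Lemma T_nz (T : E -> sign) F e : rel_acyclic V T F -> e \notin F -> T e <> SZero.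
Proof.
move=> [X [_ [XT XF]]] heF.
have hX : X e <> SZero by move/(XF e).2; rewrite (negbTE heF).
case hXe: (X e) hX => // _.
- by rewrite ((XT e).2 hXe).
- by rewrite ((XT e).1 hXe).
Qed.

Lemma pe_GF (T : E -> sign) F G p e : rel_acyclic V T F -> Y_FG_open V T F G p ->
  e \in G :\: F -> exists q, p e = Some q /\ sgnR q = T e /\ q != 0.
Proof.
move=> ra [_ H] he.
have heF : e \notin F by move: he; rewrite in_setD => /andP[].
have nz := T_nz ra heF.
have [_ [hP [hN _]]] := H e.
case hT: (T e) nz => // _.
- have [q [-> hq]] := hN he hT; exists q; split=> //; split; first by rewrite sgnR_neg.
  by rewrite lt_eqF.
- have [q [-> hq]] := hP he hT; exists q; split=> //; split; first by rewrite sgnR_pos.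
  by rewrite gt_eqF.
Qed.

Lemma transfer (T T' : E -> sign) F G p : tope V T' -> rel_acyclic V T' G ->
  rel_acyclic V T F -> F \subset G ->
  (forall e, e \in G :\: F -> T e = T' e) -> Y_FG_open V T F G p -> Y_V V T' p.
Proof.
move=> [[t [Vt tT]] _] [X [[x [Vx xX]] [XT XG]]] raF sFG eqT Yp.
have YV := Yp.1.
have xG : forall e, e \in G -> x e = 0.
  by move=> e /(XG e).1; rewrite xX /sgn_vec; exact: sgnR_Z.
have xnG : forall e, e \notin G -> sgnR (x e) = T' e /\ x e != 0.
  move=> e he.
  have hX : X e <> SZero by move/(XG e).2; rewrite (negbTE he).
  have sx : sgnR (x e) = X e by rewrite xX.
  case hXe: (X e) hX sx => // _ sx.
  - by rewrite ((XT e).2 hXe); split=> //; rewrite lt_eqF // sgnR_N.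
  - by rewrite ((XT e).1 hXe); split=> //; rewrite gt_eqF // sgnR_P.
have [Xm [hXm HXm]] := lb_nz x.
pose fq := fun e => if p e is Some a then a else 0.
have [m [hm Hm]] := lb_nz fq.
have [Tb [hTb HTb]] := ub_fin t.
have [C [hC HC]] := proj_lemma (enum F).
move=> eps heps.
have heps' : 0 < eps^-1 by rewrite invr_gt0.
pose mu := if eps <= m then eps else m.
have [hmu [hmue hmum]] : 0 < mu /\ mu <= eps /\ mu <= m.
  rewrite /mu; case: ifP => h; first by split=> //; split.
  move/negbT: h; rewrite -ltNge => h; split=> //; split=> //; exact: ltW.
have [eta [heta e1]] : exists eta, 0 < eta /\ (C + 1) * eta = mu / 2.
  exists (mu / (2 * (C + 1))); split; first by apply: divr_gt0 => //; lra.
  field; lra.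
have [del [hdel e2]] : exists del, 0 < del /\ (Tb + 1) * del = mu / 4.
  exists (mu / (4 * (Tb + 1))); split; first by apply: divr_gt0 => //; lra.
  field; lra.
have [v [[Vv vT] nv]] := YV eta heta.
have [z [Vz [zF zb]]] : exists z, V z /\ (forall f, f \in F -> z f = v f) /\
    forall e, `|z e| <= C * eta.
  have [z [Vz [zF zb]]] := HC v Vv eta (ltW heta) (fun f hf => ltac:(
    rewrite mem_enum in hf; have := nv f; rewrite ((Yp.2 f).1 hf) /= subr0 => h;
    exact: ltW h)).
  by exists z; split=> //; split=> // f hf; apply: zF; rewrite mem_enum.
pose w := fun e => 1 * (1 * v e + (-1) * z e) + del * t e.
have Vw : V w by apply: Vlin => //; apply: Vlin.
have [W [hW HW]] := ub_fin w.
have [lam [hlam elam]] : exists lam, 0 < lam /\ lam * Xm = W + eps^-1 + 1.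
  have hei : 0 < eps^-1 by rewrite invr_gt0.
  exists ((W + eps^-1 + 1) / Xm); split; first by apply: divr_gt0 => //; lra.
  field; lra.
pose u := fun e => 1 * w e + lam * x e.
have Vu : V u by apply: Vlin.
have ue : forall e, u e = v e - z e + del * t e + lam * x e by move=> e; rewrite /u /w; ring.
have uw : forall e, u e = w e + lam * x e by move=> e; rewrite /u; ring.
clearbody u w.
have key : forall e, sgn_vec u e = T' e /\ near_P1 (p e) (u e) eps.
  move=> e.
  have hTe := HTb e.
  have hde : del * `|t e| <= del * Tb by rewrite ler_wpM2l // ltW.
  case heG: (e \in G); last first.
    have [sx nx] := xnG e (negbT heG).
    have pn := (Yp.2 e).2.2.2 (negbT heG).
    have hxm := HXm e; rewrite (negbTE nx) in hxm.
    have hl : lam * Xm <= `|lam * x e| by rewrite normrM (gtr0_norm hlam) ler_wpM2l // ltW.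
    have hwe := HW e.
    have hd : `|u e - lam * x e| < `|lam * x e|.
      have -> : u e - lam * x e = w e by rewrite uw; ring.
      have := invr_gt0 eps; lra.
    split; first by rewrite /sgn_vec (sgn_close hd) sgnR_scale.
    rewrite pn /=.
    have : `|lam * x e| <= `|u e| + `|w e|.
      have -> : lam * x e = u e - w e by rewrite uw; ring.
      exact: ler_normB.
    lra.
  have xe0 := xG e heG.
  case heF: (e \in F).
    have ze := zF e heF.
    have hu : u e = del * t e by rewrite ue ze xe0; ring.
    rewrite /sgn_vec hu.
    split; first by rewrite sgnR_scale // -tT.
    rewrite ((Yp.2 e).1 heF) /= subr0 normrM (gtr0_norm hdel).
    nra.
  have he : e \in G :\: F by rewrite in_setD heF heG.
  have [q [pq [sq nq]]] := pe_GF raF Yp he.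
  have hqm : m <= `|q| by have := Hm e; rewrite /fq pq (negbTE nq).
  have hv : `|v e - q| < eta by have := nv e; rewrite pq.
  have hze := zb e.
  have htri : `|u e - q| <= `|v e - q| + `|z e| + del * `|t e|.
    have -> : u e - q = (v e - q) + (- z e) + del * t e by rewrite ue xe0; ring.
    apply: (le_trans (ler_normD _ _)); rewrite normrM (gtr0_norm hdel) lerD2r.
    by apply: (le_trans (ler_normD _ _)); rewrite normrN.
  have hlt : `|u e - q| < mu by nra.
  split.
    rewrite /sgn_vec -(eqT e he) -sq; apply: sgn_close; lra.
  by rewrite pq /=; lra.
exists u; split; first by split=> // e; exact: (key e).1.
by move=> e; exact: (key e).2.
Qed.


Lemma transfer_full (T T' : E -> sign) F G p : tope V T' -> rel_acyclic V T' G ->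
  rel_acyclic V T F -> F \subset G ->
  (forall e, e \in G :\: F -> T e = T' e) -> Y_FG_open V T F G p -> Y_FG_open V T' F G p.
Proof.
move=> tT raG raF sFG eqT Yp; split; first exact: (transfer tT raG raF sFG eqT Yp).
move=> e; have [h1 [h2 [h3 h4]]] := Yp.2 e; split=> //; split.
  by move=> he hP; apply: h2 => //; rewrite eqT.
by split=> // he hN; apply: h3 => //; rewrite eqT.
Qed.

End Aux.

Theorem lemma5p3 (R : realType) (E : finType) (V : (E -> R) -> Prop)
  (hV : is_subspace V)
  (F G : {set E}) (T : E -> sign) (F' G' : {set E}) (T' : E -> sign)
  (h1 : triple V F G T) (h2 : triple V F' G' T') :
  (~ triple_equiv F G T F' G' T' ->
     forall p, ~ (Y_FG_open V T F G p /\ Y_FG_open V T' F' G' p)) /\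
  (triple_equiv F G T F' G' T' ->
     forall p, Y_FG_open V T F G p <-> Y_FG_open V T' F' G' p).
Proof.
move: h1 h2 => [tT [_ [_ [raF [raG sFG]]]]] [tT' [_ [_ [raF' [raG' sFG']]]]].
split.
- move=> hne p [Y1 Y2].
  have cG : forall (F1 G1 F2 G2 : {set E}) T1 T2 e, rel_acyclic V T1 F1 ->
      Y_FG_open V T1 F1 G1 p -> Y_FG_open V T2 F2 G2 p -> e \in G1 -> e \notin G2 -> False.
    move=> F1 G1 F2 G2 T1 T2 e ra Ya Yb he1 he2.
    have pn := (Yb.2 e).2.2.2 he2.
    case hF: (e \in F1); first by rewrite ((Ya.2 e).1 hF) in pn.
    have he : e \in G1 :\: F1 by rewrite in_setD hF he1.
    by have [q [pq _]] := pe_GF ra Ya he; rewrite pq in pn.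
  have cF : forall (F1 F2 G1 : {set E}) T1 T2 e, F1 \subset G1 -> rel_acyclic V T2 F2 ->
      Y_FG_open V T1 F1 G1 p -> Y_FG_open V T2 F2 G1 p -> e \in F1 -> e \notin F2 -> False.
    move=> F1 F2 G1 T1 T2 e sub ra Ya Yb he1 he2.
    have pz := (Ya.2 e).1 he1.
    have he : e \in G1 :\: F2 by rewrite in_setD he2 (subsetP sub e he1).
    have [q [pq [_ nq]]] := pe_GF ra Yb he.
    by rewrite pz in pq; case: pq => hq; rewrite -hq eqxx in nq.
  have diff : forall A B : {set E}, A != B -> exists e, (e \in A) != (e \in B).
    move=> A B nAB; apply/existsP; rewrite -negb_forall; apply: contra nAB.
    by move=> /forallP h; apply/eqP/setP => y; apply/eqP/h.
  case: (eqVneq G G') => [eG|nG]; last first.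
    have [e he] := diff _ _ nG.
    case hG: (e \in G) he; case hG': (e \in G') => // _.
      exact: (cG _ _ _ _ _ _ e raF Y1 Y2 hG (negbT hG')).
    exact: (cG _ _ _ _ _ _ e raF' Y2 Y1 hG' (negbT hG)).
  subst G'.
  case: (eqVneq F F') => [eF|nF]; last first.
    have [e he] := diff _ _ nF.
    case hF: (e \in F) he; case hF': (e \in F') => // _.
      exact: (cF _ _ _ _ _ e sFG raF' Y1 Y2 hF (negbT hF')).
    exact: (cF _ _ _ _ _ e sFG' raF Y2 Y1 hF' (negbT hF)).
  subst F'.
  apply: hne; split=> // e he; apply: NNPP => hT.
  have [q [pq [sq _]]] := pe_GF raF Y1 he.
  have [q' [pq' [sq' _]]] := pe_GF raF' Y2 he.
  rewrite pq in pq'; case: pq' => hq; subst q'.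
  by apply: hT; rewrite -sq -sq'.
- move=> [eF eG hT] p; subst F' G'; split => Y.
  + exact: (transfer_full hV tT' raG' raF sFG hT Y).
  + by apply: (transfer_full hV tT raG raF' sFG) => // e he; rewrite hT.
Qed.
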